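(* Let $M$ be a commutative monoid. A nonempty closed subset $X$ of the terminal space $\mathcal S(M)$ is irreducible if and only if $\mathcal K(X)=\bigcap_{I\in X}I$ is a strongly irreducible ideal of $M$.
   Context: A monoid is a commutative monoid $(M,\cdot,1)$. An ideal of $M$ is a subset $I\subseteq M$ such that $im\in I$ for all $i\in I$, $m\in M$; it is proper if $I\neq M$. A proper ideal $K$ of $M$ is strongly irreducible if for all ideals $I,J$ of $M$, $I\cap J\subseteq K$ implies $I\subseteq K$ or $J\subseteq K$. $\mathcal S(M)$ is the set of all strongly irreducible ideals of $M$. For $X\subseteq\mathcal S(M)$, $\mathcal K(X)=\bigcap_{I\in X}I$, and $\mathcal{HK}(X)=\{J\in\mathcal S(M)\mid J\supseteq\mathcal K(X)\}$ if $X\neq\emptyset$, $\mathcal{HK}(\emptyset)=\emptyset$. The terminal space of $M$ is the set $\mathcal S(M)$ with the topology whose closed sets are exactly the sets $\mathcal{HK}(X)$, $X\subseteq\mathcal S(M)$. A subset $Y$ of a topological space is irreducible if whenever $Y\subseteq Y_1\cup Y_2$ with $Y_1,Y_2$ closed, then $Y\subseteq Y_1$ or $Y\subseteq Y_2$. *)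

(* Defs.v *)
Set Implicit Arguments.

Record comMonoid := ComMonoid {
  carrier :> Type;
  mul : carrier -> carrier -> carrier;
  one : carrier;
  mulA : forall x y z, mul x (mul y z) = mul (mul x y) z;
  mulC : forall x y, mul x y = mul y x;
  mul1m : forall x, mul one x = x
}.

Definition subset {T : Type} (A B : T -> Prop) : Prop := forall x, A x -> B x.

Section Terminal.
Variable M : comMonoid.

Definition ideal (I : M -> Prop) : Prop :=
  forall i m, I i -> I (mul M i m).

Definition proper_ideal (I : M -> Prop) : Prop :=
  ideal I /\ exists x : M, ~ I x.

Definition strongly_irreducible (K : M -> Prop) : Prop :=
  proper_ideal K /\
  forall I J : M -> Prop, ideal I -> ideal J ->
    subset (fun x => I x /\ J x) K -> subset I K \/ subset J K.

Definition SM : (M -> Prop) -> Prop := strongly_irreducible.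

Definition Kint (X : (M -> Prop) -> Prop) : M -> Prop :=
  fun x => forall I, X I -> I x.

(* HK(X) = {J in S(M) | J ⊇ K(X)} if X nonempty, and ∅ if X = ∅ *)
Definition HK (X : (M -> Prop) -> Prop) : (M -> Prop) -> Prop :=
  fun J => (exists I, X I) /\ SM J /\ subset (Kint X) J.

Definition terminal_closed (Y : (M -> Prop) -> Prop) : Prop :=
  exists X, subset X SM /\ Y = HK X.

Definition terminal_irreducible (Y : (M -> Prop) -> Prop) : Prop :=
  forall Y1 Y2, terminal_closed Y1 -> terminal_closed Y2 ->
    subset Y (fun J => Y1 J \/ Y2 J) -> subset Y Y1 \/ subset Y Y2.

End Terminal.

(* Main.v *)
Require Import Defs.
From Stdlib Require Import FunctionalExtensionality PropExtensionality.

Lemma memX (M : comMonoid) (X : (M -> Prop) -> Prop) :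
  subset X (@SM M) -> @terminal_closed M X -> (exists I, X I) ->
  forall P, @SM M P -> subset (@Kint M X) P -> X P.
Proof.
  intros HS [X0 [HX0 ->]] [I0 HI0] P HP HK.
  destruct HI0 as [Hne _].
  split; [exact Hne|split; [exact HP|]].
  intros x Hx. apply HK. intros J [_ [_ HJ]]. apply HJ, Hx.
Qed.

Theorem theorem2p6 (M : comMonoid) (X : (M -> Prop) -> Prop) :
  subset X (@SM M) -> @terminal_closed M X -> (exists I, X I) ->
  (@terminal_irreducible M X <-> @strongly_irreducible M (@Kint M X)).
Proof.
  intros HS HC Hne.
  pose proof (@memX M X HS HC Hne) as HF.
  split.
  - intros Hirr.
    assert (Hid : @ideal M (@Kint M X)).
    { intros i m Hi J HJ. destruct (HS J HJ) as [[HJi _] _]. apply HJi, Hi, HJ. }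
    split.
    + split; [exact Hid|].
      destruct Hne as [I HI]. destruct (HS I HI) as [[_ [x Hx]] _].
      exists x. intro H. apply Hx, H, HI.
    + intros I J HI HJ HIJ.
      set (Y1 := fun P => X P /\ subset I P).
      set (Y2 := fun P => X P /\ subset J P).
      assert (Hcl : forall Z : M -> Prop, @terminal_closed M (fun P => X P /\ subset Z P)).
      { intros Z. exists (fun P => X P /\ subset Z P). split.
        - intros P [HP _]. apply HS, HP.
        - apply functional_extensionality; intro P.
          apply propositional_extensionality; split.
          + intros [HP HZ]. split; [exists P; split; assumption|].
            split; [apply HS, HP|]. intros x Hx. apply Hx. split; assumption.
          + intros [_ [HP HK]]. split.
            * apply HF; [exact HP|]. intros x Hx. apply HK.
              intros Q [HQ _]. apply Hx, HQ.
            * intros x Hx. apply HK. intros Q [_ HQ]. apply HQ, Hx. }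
      destruct (Hirr Y1 Y2 (Hcl I) (Hcl J)) as [H|H].
      * intros P HP. destruct (HS P HP) as [_ Hsi].
        destruct (Hsi I J HI HJ) as [H1|H1].
        -- intros x [Hx1 Hx2]. apply (HIJ x (conj Hx1 Hx2)), HP.
        -- left. split; assumption.
        -- right. split; assumption.
      * left. intros x Hx P HP. apply (proj2 (H P HP)), Hx.
      * right. intros x Hx P HP. apply (proj2 (H P HP)), Hx.
  - intros HK Y1 Y2 [A [HA ->]] [B [HB ->]] Hsub.
    assert (HKX : X (@Kint M X)) by (apply HF; [exact HK|intros x Hx; exact Hx]).
    destruct (Hsub _ HKX) as [[HAn [_ HAK]]|[HBn [_ HBK]]].
    + left. intros P HP. split; [exact HAn|]. split; [apply HS, HP|].
      intros x Hx. apply (HAK x Hx P HP).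
    + right. intros P HP. split; [exact HBn|]. split; [apply HS, HP|].
      intros x Hx. apply (HBK x Hx P HP).
Qed.
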